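(* Let $\mathcal H$ be finite-dimensional, $I\subseteq\mathbb R$ an open interval, and for $j=1,\dots,n$ let $\{\rho_{j,\theta}\}_{\theta\in I}$ be differentiable families of positive definite density matrices on $\mathcal H$. Let $\varrho_\theta=\rho_{1,\theta}\otimes\cdots\otimes\rho_{n,\theta}$ on $\mathfrak H=\mathcal H^{\otimes n}$ and $\Theta$ a self-adjoint operator on $\mathfrak H$, independent of $\theta$, with $\operatorname{Tr}(\varrho_\theta\Theta)=\theta$ for all $\theta\in I$. Put $\widehat{\mathbf H}(\theta)=\varrho_\theta^{-1/2}\varrho_\theta'\varrho_\theta^{-1/2}$; then $\widehat{\mathbf H}=\sum_j I^{\otimes(j-1)}\otimes\widehat H_j\otimes I^{\otimes(n-j)}$ with $\widehat H_j=\rho_{j,\theta}^{-1/2}\rho_{j,\theta}'\rho_{j,\theta}^{-1/2}$, and $$\operatorname{Tr}\bigl(\varrho_\theta(\Theta-\theta)^2\bigr)\ \ge\ \frac{1}{\widehat{\mathbf I}^{(n)}(\theta)},\qquad \widehat{\mathbf I}^{(n)}(\theta)=\operatorname{Tr}(\varrho_\theta\widehat{\mathbf H}^2)=\sum_j\operatorname{Tr}(\rho_{j,\theta}\widehat H_j^2).$$ In particular, for $n=1$, $\operatorname{Var}_\theta(\Theta)\ge1/\widehat{\mathbf I}(\theta)$ with $\widehat{\mathbf I}(\theta)=\operatorname{Tr}(\rho_\theta\widehat H^2)$, and if all $\rho_{j,\theta}=\rho_\theta$ then $\operatorname{Var}_\theta(\Theta)\ge1/(n\widehat{\mathbf I}(\theta))$.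 *)

(* Defs.v *)
From HB Require Import structures.
From mathcomp Require Import all_boot all_order all_algebra.
From mathcomp Require Import sesquilinear spectral.
From mathcomp Require Import complex.
From mathcomp Require Import all_classical all_reals.
From mathcomp Require Import ereal topology normedtype derive.

Set Implicit Arguments.
Unset Strict Implicit.
Unset Printing Implicit Defensive.

Import Order.TTheory GRing.Theory Num.Theory.
Import numFieldNormedType.Exports.
Local Open Scope ring_scope.
Local Open Scope complex_scope.
Local Open Scope sesquilinear_scope.

Section Defs.
Variable R : realType.
Local Notation C := R[i].

Definition psdmx (m : nat) (A : 'M[C]_m) : Prop :=
  A \is hermsymmx /\ forall v : 'rV[C]_m, 0 <= (v *m A *m (v ^t*)) 0 0.

Definition pdmx (m : nat) (A : 'M[C]_m) : Prop :=
  A \is hermsymmx /\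
  forall v : 'rV[C]_m, v != 0 -> 0 < (v *m A *m (v ^t*)) 0 0.

Definition pd_density (m : nat) (A : 'M[C]_m) : Prop :=
  pdmx A /\ \tr A = 1.

(** the positive semidefinite square root A^{1/2} (chosen classically
    among positive semidefinite S with S*S = A; 0 if there is none) *)
Definition msqrt (m : nat) (A : 'M[C]_m) : 'M[C]_m :=
  xget 0 [set S : 'M[C]_m | psdmx S /\ S *m S = A].

Definition minvsqrt (m : nat) (A : 'M[C]_m) : 'M[C]_m := msqrt (invmx A).

Definition mx_derivable (m : nat) (f : R -> 'M[C]_m) (t : R) : Prop :=
  forall i j : 'I_m,
    derivable (fun s => complex.Re (f s i j)) t 1 /\
    derivable (fun s => complex.Im (f s i j)) t 1.

Definition mx_derive (m : nat) (f : R -> 'M[C]_m) (t : R) : 'M[C]_m :=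
  \matrix_(i, j) Complex (derive1 (fun s => complex.Re (f s i j)) t)
                         (derive1 (fun s => complex.Im (f s i j)) t).

Definition Hhat (m : nat) (rho : R -> 'M[C]_m) (t : R) : 'M[C]_m :=
  minvsqrt (rho t) *m mx_derive rho t *m minvsqrt (rho t).

End Defs.

(** the tensor power H^{(x) n} of C^d : basis indexed by functions
    'I_n -> 'I_d (multi-indices), enumerated via enum_val *)
Definition tdim (d n : nat) : nat := #|{ffun 'I_n -> 'I_d}|.

Definition tensmxs (K : nzRingType) (d n : nat) (A : 'I_n -> 'M[K]_d)
  : 'M[K]_(tdim d n) :=
  \matrix_(i, k) \prod_(j < n)
     A j ((enum_val i : {ffun 'I_n -> 'I_d}) j)
         ((enum_val k : {ffun 'I_n -> 'I_d}) j).

Definition embed_at (K : nzRingType) (d n : nat) (j : 'I_n) (A : 'M[K]_d)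
  : 'M[K]_(tdim d n) :=
  tensmxs (fun k => if k == j then A else 1%:M).

(* Main.v *)
Require Import Defs.
From HB Require Import structures.
From mathcomp Require Import all_boot all_order all_algebra.
From mathcomp Require Import sesquilinear spectral.
From mathcomp Require Import complex.
From mathcomp Require Import all_classical all_reals.
From mathcomp Require Import ereal topology normedtype derive.
From mathcomp Require Import ring.

Import Order.TTheory GRing.Theory Num.Theory.
Import numFieldNormedType.Exports.
Local Open Scope ring_scope.
Local Open Scope complex_scope.
Set Implicit Arguments.
Unset Strict Implicit.
Unset Printing Implicit Defensive.
Section Tens.
Variables (K : comNzRingType) (d n : nat).
Local Notation T := {ffun 'I_n -> 'I_d}.

Lemma sum_tdim (G : T -> K) :
  \sum_(i < tdim d n) G (enum_val i) = \sum_(f : T) G f.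
Proof.
rewrite [RHS](reindex (@enum_val T (mem T))) //=.
by exists enum_rank => x _; [exact: enum_valK | exact: enum_rankK].
Qed.

Lemma tensmxsE (A : 'I_n -> 'M[K]_d) i k :
  tensmxs A i k = \prod_(j < n) A j ((enum_val i : T) j) ((enum_val k : T) j).
Proof. by rewrite mxE. Qed.

Lemma tensmxs_ext (A B : 'I_n -> 'M[K]_d) : A =1 B -> tensmxs A = tensmxs B.
Proof. by move=> AB; apply/matrixP => i k; rewrite !mxE; apply: eq_bigr => j _; rewrite AB. Qed.

Lemma tensmxs_mul (A B : 'I_n -> 'M[K]_d) :
  tensmxs A *m tensmxs B = tensmxs (fun j => A j *m B j).
Proof.
apply/matrixP => i k; rewrite !mxE.
under eq_bigr do rewrite !mxE -big_split /=.
rewrite (sum_tdim (fun f => \prod_(j < n) (A j ((enum_val i : T) j) (f j) * B j (f j) ((enum_val k : T) j)))).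
rewrite [RHS](eq_bigr (fun j => \sum_(x < d) A j (enum_val i j) x * B j x (enum_val k j))); last by move=> j _; rewrite mxE.
by rewrite bigA_distr_bigA.
Qed.

Lemma tensmxs_tr (A : 'I_n -> 'M[K]_d) :
  \tr (tensmxs A) = \prod_(j < n) \tr (A j).
Proof.
rewrite /mxtrace; under eq_bigr do rewrite mxE.
rewrite (sum_tdim (fun f => \prod_(j < n) A j (f j) (f j))).
rewrite [RHS](eq_bigr (fun j => \sum_(x < d) A j x x)) //.
by rewrite bigA_distr_bigA.
Qed.

Lemma tensmxs1 : tensmxs (fun _ : 'I_n => 1%:M : 'M[K]_d) = 1%:M.
Proof.
apply/matrixP => i k; rewrite !mxE.
have [->|ik] := eqVneq i k.
  by rewrite mulr1n; apply: big1 => j _; rewrite mxE eqxx.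
rewrite mulr0n.
have : (enum_val i : T) != enum_val k.
  by apply: contra ik => /eqP /(can_inj enum_valK) ->.
case/eqP/ffunP/boolp.existsNP => j /eqP hj.
by rewrite (bigD1 j) //= mxE (negbTE hj) mulr0n mul0r.
Qed.

End Tens.

Section Gen.
Variable K : comNzRingType.

Lemma mxsand m (X Y Z : 'M[K]_m) : Z *m X = 1%:M ->
  X *m Y *m Z *m (X *m Y *m Z) = X *m (Y *m Y) *m Z.
Proof.
by move=> ZX; rewrite !mulmxA -(mulmxA (X *m Y)) ZX mulmx1 -(mulmxA X).
Qed.

Lemma mx_eigL m p q (x : 'M[K]_(p, m)) (D T : 'M[K]_m) (y : 'M[K]_(m, q)) c :
  x *m D = c *: x -> x *m (D *m T) *m y = c *: (x *m T *m y).
Proof. by move=> xD; rewrite mulmxA xD -!scalemxAl. Qed.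

Lemma mx_eigR m p q (x : 'M[K]_(p, m)) (S D : 'M[K]_m) (y : 'M[K]_(m, q)) c :
  D *m y = c *: y -> x *m (S *m D) *m y = c *: (x *m S *m y).
Proof. by move=> Dy; rewrite -mulmxA -mulmxA Dy !scalemxAr mulmxA. Qed.

Lemma tr_expand m (A B C E : 'M[K]_m) (l : K) :
  \tr ((A - l *: B) *m (C - l *: E)) =
  \tr (A *m C) - l * \tr (A *m E) - l * \tr (B *m C) + l ^+ 2 * \tr (B *m E).
Proof.
rewrite mulmxBl !mulmxBr -!scalemxAl -!scalemxAr !linearB /= !linearZ /=.
ring.
Qed.

End Gen.
Local Open Scope sesquilinear_scope.
Section Spec.
Variable R : realType.
Local Notation C := R[i].

Lemma hermP m (A : 'M[C]_m) : reflect (A^t* = A) (A \is hermsymmx).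
Proof. by apply: (iffP (is_hermitianmxP _ _ _)); rewrite expr0 scale1r => /esym. Qed.

Lemma trmxC_mul m k p (A : 'M[C]_(m,k)) (B : 'M[C]_(k,p)) : (A *m B)^t* = B^t* *m A^t*.
Proof. by rewrite trmx_mul map_mxM. Qed.

Lemma dot_ge0 m (w : 'rV[C]_m) : 0 <= (w *m w^t*) 0 0.
Proof.
have [->|w0] := eqVneq w 0; first by rewrite mul0mx mxE.
by rewrite -dotmxE ltW // dotmx_is_dotmx.
Qed.

Lemma dot_eq0 m (w : 'rV[C]_m) : (w *m w^t*) 0 0 = 0 -> w = 0.
Proof.
move=> h; apply/eqP; apply: contraT => w0.
by have := dotmx_is_dotmx w0; rewrite dotmxE h ltxx.
Qed.

Lemma psd_herm m (A : 'M[C]_m) : psdmx A -> A^t* = A.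
Proof. by case=> /hermP. Qed.

Lemma psd_herm_sq m (T : 'M[C]_m) : T^t* = T -> psdmx (T *m T).
Proof.
move=> hT; split; first by apply/hermP; rewrite trmxC_mul hT.
move=> v; have -> : v *m (T *m T) *m v^t* = (v *m T) *m (v *m T)^t*.
  by rewrite trmxC_mul hT !mulmxA.
exact: dot_ge0.
Qed.

Lemma delta_diag m (dg : 'rV[C]_m) i :
  (delta_mx 0 i : 'rV[C]_m) *m diag_mx dg = dg 0 i *: delta_mx 0 i.
Proof.
apply/matrixP => a b; rewrite mul_mx_diag !mxE.
by case: (b =P i) => [->|]; rewrite ?andbT ?andbF ?mul0r ?mulr0 // mulrC.
Qed.

Lemma spec_decomp m (A : 'M[C]_m) : A^t* = A ->
  let P := spectralmx A in let dg := spectral_diag A in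
  [/\ P *m P^t* = 1%:M, A = P^t* *m diag_mx dg *m P & dg \is a realmx].
Proof.
move=> hA P dg.
have hA' : A \is hermsymmx by apply/hermP.
have Pu : P \is unitarymx := spectral_unitarymx A.
split; first exact/unitarymxP.
  by rewrite -invmx_unitary //; apply/orthomx_spectralP/hermitian_normalmx.
exact: hermitian_spectral_diag_real.
Qed.

Lemma spec_row m (A : 'M[C]_m) (P : 'M[C]_m) (dg : 'rV[C]_m) i :
  P *m P^t* = 1%:M -> A = P^t* *m diag_mx dg *m P ->
  let x := (delta_mx 0 i : 'rV[C]_m) *m P in
  [/\ x *m A = dg 0 i *: x, x *m P^t* = delta_mx 0 i & x != 0].
Proof.
move=> PP AE x.
have xP : x *m P^t* = delta_mx 0 i by rewrite -mulmxA PP mulmx1.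
split => //.
  by rewrite AE !mulmxA xP delta_diag scalemxAl.
apply: contraTneq isT => x0; move: xP; rewrite x0 mul0mx => /matrixP /(_ 0 i).
by rewrite !mxE !eqxx /= => /eqP; rewrite eq_sym oner_eq0.
Qed.

Lemma psd_sqrt_ex m (A : 'M[C]_m) : psdmx A -> exists S, psdmx S /\ S *m S = A.
Proof.
move=> [hA' psdA]; have hA := hA'; move/hermP: hA => hA.
have [PP AE _] := spec_decomp hA.
set P := spectralmx A in PP AE; set dg := spectral_diag A in AE.
have dg0 i : 0 <= dg 0 i.
  have [xA xP _] := spec_row i PP AE.
  have := psdA ((delta_mx 0 i : 'rV[C]_m) *m P).
  rewrite xA -scalemxAl trmxC_mul mulmxA xP mxE [X in _ * X]mxE.
  rewrite (bigD1 i) //= big1 => [|k ki]; rewrite !mxE ?eqxx.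
    by rewrite /= mulr1n conjC1 mulr1 addr0 mulr1.
  by rewrite /= (negbTE ki) mul0r.
pose s := \row_i sqrtC (dg 0 i).
exists (P^t* *m diag_mx s *m P); split; last first.
  have E1 : diag_mx s *m diag_mx s = diag_mx dg.
    apply/matrixP => a b.
  rewrite mul_mx_diag !mxE.
    by case: (a =P b) => [->|]; rewrite ?mulr1n ?mulr0n ?mulr0 ?mul0r // -expr2 sqrtCK.
  by rewrite (mxsand _ PP) E1 -AE.
have hs : (diag_mx s)^t* = diag_mx s.
  rewrite tr_diag_mx map_diag_mx; congr diag_mx; apply/rowP => j.
  by rewrite !mxE; apply: geC0_conj; rewrite sqrtC_ge0.
split.
  by apply/hermP; rewrite !trmxC_mul trmxCK hs mulmxA.
move=> v; pose w := v *m P^t*.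
have -> : v *m (P^t* *m diag_mx s *m P) *m v^t* = w *m diag_mx s *m w^t*.
  by rewrite trmxC_mul trmxCK !mulmxA.
rewrite mxE; apply: sumr_ge0 => k _; rewrite mul_mx_diag !mxE.
rewrite mulrAC; apply: mulr_ge0; first exact: mul_conjC_ge0.
by rewrite sqrtC_ge0.
Qed.

End Spec.
Section Spec2.
Variable R : realType.
Local Notation C := R[i].

Lemma psd_quad0 m (S : 'M[C]_m) (x : 'rV[C]_m) :
  psdmx S -> (x *m S *m x^t*) 0 0 = 0 -> x *m S = 0.
Proof.
move=> /psd_sqrt_ex [Q [psdQ <-]] h.
have hQ := psd_herm psdQ.
have : x *m Q = 0.
  apply: dot_eq0; rewrite -h trmxC_mul hQ !mulmxA //.
by rewrite mulmxA => ->; rewrite mul0mx.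
Qed.

Lemma psd_sqrt_uniq m (S T : 'M[C]_m) :
  psdmx S -> psdmx T -> S *m S = T *m T -> S = T.
Proof.
move=> pS pT eST.
have hS := psd_herm pS; have hT := psd_herm pT.
pose D := S - T.
have hD : D^t* = D by rewrite /D linearB /= map_mxB hS hT.
have [PP DE Dreal] := spec_decomp hD.
set P := spectralmx D in PP DE; set dg := spectral_diag D in DE Dreal.
suff dg0 : dg = 0.
  have z : diag_mx (0 : 'rV[C]_m) = 0 by apply/matrixP => a b; rewrite !mxE mul0rn.
  by apply/eqP; rewrite -subr_eq0 -/D DE dg0 z mulmx0 mul0mx.
apply/rowP => i; rewrite mxE.
have [xD xP x0] := spec_row i PP DE.
set x := _ *m P in xD xP x0.
set c := dg 0 i in xD *.
have cr : c^* = c.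
  by apply/CrealP; have /mxOverP := Dreal; apply.
have Dx : D *m x^t* = c *: x^t*.
  rewrite -hD -trmxC_mul xD linearZ /= map_mxZ; congr (_ *: _); exact: cr.
have E : x *m (S *m S - T *m T) *m x^t* = c *: (x *m S *m x^t* + x *m T *m x^t*).
  have -> : S *m S - T *m T = S *m D + D *m T.
    by rewrite /D mulmxBr mulmxBl addrA subrK.
  have E1 : x *m (S *m D) *m x^t* = c *: (x *m S *m x^t*) := mx_eigR _ _ Dx.
  have E2 : x *m (D *m T) *m x^t* = c *: (x *m T *m x^t*) := mx_eigL _ _ xD.
  by rewrite mulmxDr mulmxDl E1 E2 scalerDr.
apply/eqP; apply: contraT => c0.
move: E; rewrite eST subrr mulmx0 mul0mx => /matrixP /(_ 0 0).
rewrite [X in X = _]mxE [X in _ = X]mxE [X in _ = _ * X]mxE => /esym /eqP; rewrite mulf_eq0 (negbTE c0) /=.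
have ps := (pS.2 x); have pt := (pT.2 x).
rewrite (paddr_eq0 ps pt) => /andP [/eqP hs /eqP ht].
have xS := psd_quad0 pS hs; have xT := psd_quad0 pT ht.
move: xD; rewrite /D mulmxBr xS xT subrr => /esym /eqP.
by rewrite scaler_eq0 (negbTE c0) (negbTE x0).
Qed.

Lemma msqrtP m (A : 'M[C]_m) : psdmx A -> psdmx (msqrt A) /\ msqrt A *m msqrt A = A.
Proof. by move=> /psd_sqrt_ex ex; apply: (xgetPex 0 ex). Qed.

Lemma msqrt_uniq m (S A : 'M[C]_m) : psdmx S -> S *m S = A -> msqrt A = S.
Proof.
move=> pS SA; apply: xget_unique; first by split.
move=> y [py yA]; apply: psd_sqrt_uniq => //; by rewrite yA.
Qed.

Lemma pd_psd m (A : 'M[C]_m) : pdmx A -> psdmx A.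
Proof.
case=> hA pA; split=> // v; have [->|v0] := eqVneq v 0.
  by rewrite !mul0mx mxE.
exact/ltW/pA.
Qed.

Lemma pd_unit m (A : 'M[C]_m) : pdmx A -> A \in unitmx.
Proof.
case=> _ pA; rewrite unitmxE unitfE; apply/negP => /det0P [v v0 vA].
by have := pA v v0; rewrite vA mul0mx mxE ltxx.
Qed.

Lemma herm_inv m (A : 'M[C]_m) : A^t* = A -> (invmx A)^t* = invmx A.
Proof. by move=> hA; rewrite trmx_inv map_invmx hA. Qed.

Lemma pd_inv_psd m (A : 'M[C]_m) : pdmx A -> psdmx (invmx A).
Proof.
move=> pA; have uA := pd_unit pA; have [hA' _] := pA.
have hA : A^t* = A by apply/hermP.
split; first by apply/hermP/herm_inv.
move=> v; have := (pd_psd pA).2 (v *m invmx A).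
by rewrite trmxC_mul herm_inv // !mulmxA mulmxKV.
Qed.

Lemma isqrt_facts m (A S : 'M[C]_m) : psdmx S -> S *m S = invmx A -> A \in unitmx ->
  [/\ S \in unitmx, S *m A *m S = 1%:M, (invmx S)^t* = invmx S
    & invmx S *m invmx S = A].
Proof.
move=> pS SS uA.
have uSS : S *m S \in unitmx by rewrite SS unitmx_inv.
have uS : S \in unitmx by move: uSS; rewrite unitmx_mul => /andP [].
have hS := psd_herm pS.
have SSA : S *m S *m A = 1%:M by rewrite SS mulVmx.
have iSS : invmx S *m invmx S = A.
  by rewrite -[LHS]mulmx1 -SSA !mulmxA mulmxKV // mulVmx // mul1mx.
split=> //; last by apply: herm_inv.
by rewrite -iSS !mulmxA mulmxKV // mulmxV.
Qed.

Lemma minvsqrtP m (A : 'M[C]_m) : pdmx A ->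
  let S := minvsqrt A in
  [/\ psdmx S, S *m S = invmx A, S \in unitmx & S *m A *m S = 1%:M].
Proof.
move=> pA S; have uA := pd_unit pA.
have [pS SS] := msqrtP (pd_inv_psd pA); rewrite -/(minvsqrt A) -/S in pS SS.
by have [? ? _ _] := isqrt_facts pS SS uA.
Qed.

Lemma scC (x y : C) : x *: y = x * y. Proof. by []. Qed.

Lemma ip_ge0 m (P : 'M[C]_m) : 0 <= \tr (P^t* *m P).
Proof.
rewrite /mxtrace; apply: sumr_ge0 => i _; rewrite mxE; apply: sumr_ge0 => k _.
by rewrite !mxE mulrC mul_conjC_ge0.
Qed.

Lemma trC m (P : 'M[C]_m) : \tr (P^t*) = Num.conj (\tr P).
Proof. by rewrite /mxtrace rmorph_sum; apply: eq_bigr => i _; rewrite !mxE. Qed.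

Lemma cs_trace m (M N : 'M[C]_m) : \tr (M^t* *m N) = 1 ->
  1 / \tr (M^t* *m M) <= \tr (N^t* *m N).
Proof.
move=> hMN; set F := \tr (M^t* *m M); set V := \tr (N^t* *m N).
have F0 : 0 <= F := ip_ge0 M; have V0 : 0 <= V := ip_ge0 N.
have hNM : \tr (N^t* *m M) = 1.
  by rewrite -[N^t* *m M]trmxCK trmxC_mul trmxCK trC hMN rmorph1.
have key (l : C) : Num.conj l = l -> 0 <= V - 2 * l + l ^+ 2 * F.
  move=> hl; have h := ip_ge0 (N - l *: M).
  have E : (N - l *: M)^t* = N^t* - l *: M^t*.
    by rewrite linearB /= linearZ /= map_mxB map_mxZ; congr (_ - _ *: _); exact: hl.
  rewrite E tr_expand -/F -/V hMN hNM in h.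
  apply: (le_trans h); rewrite le_eqVlt; apply/orP; left; apply/eqP.
  ring.
have [F0'|Fn0] := eqVneq F 0.
  have := key (1 + V); rewrite F0' mulr0 addr0.
  have -> : V - 2 * (1 + V) = - (2 + V) by ring.
  rewrite oppr_ge0 => h; exfalso.
  have {}h : 2 + V <= 0 by apply: h; apply: geC0_conj; rewrite addr_ge0.
  have : 0 < 2 + V by rewrite ltr_wpDr // ltr0n.
  by move=> h2; have := lt_le_trans h2 h; rewrite ltxx.
have hF : Num.conj (F^-1) = F^-1 by apply: geC0_conj; rewrite invr_ge0.
have := key _ hF.
have -> : V - 2 * F^-1 + F^-1 ^+ 2 * F = V - 1 / F by field.
by rewrite subr_ge0.
Qed.

End Spec2.
Section TensC.
Variable R : realType.
Local Notation C := R[i].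
Variables (d n : nat).

Lemma tensmxs_tC (A : 'I_n -> 'M[C]_d) :
  (tensmxs A)^t* = tensmxs (fun j => (A j)^t*).
Proof.
by apply/matrixP => i k; rewrite !mxE rmorph_prod; apply: eq_bigr => j _; rewrite !mxE.
Qed.

Lemma tensmxs_herm (A : 'I_n -> 'M[C]_d) :
  (forall j, (A j)^t* = A j) -> (tensmxs A)^t* = tensmxs A.
Proof. by move=> hA; rewrite tensmxs_tC; apply: tensmxs_ext. Qed.

Lemma tensmxs_psd (A : 'I_n -> 'M[C]_d) :
  (forall j, psdmx (A j)) -> psdmx (tensmxs A).
Proof.
move=> pA.
have -> : tensmxs A = tensmxs (fun j => msqrt (A j)) *m tensmxs (fun j => msqrt (A j)).
  by rewrite tensmxs_mul; apply: tensmxs_ext => j; rewrite (msqrtP (pA j)).2.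
apply: psd_herm_sq; apply: tensmxs_herm => j.
exact: psd_herm (msqrtP (pA j)).1.
Qed.

Lemma invmx_left m (A B : 'M[C]_m) : B *m A = 1%:M -> invmx A = B.
Proof.
move=> BA; have [_ uA] := mulmx1_unit BA.
by rewrite -[RHS]mulmx1 -(mulmxV uA) mulmxA BA mul1mx.
Qed.

Lemma tensmxs_inv (A : 'I_n -> 'M[C]_d) :
  (forall j, A j \in unitmx) -> invmx (tensmxs A) = tensmxs (fun j => invmx (A j)).
Proof.
move=> uA; apply: invmx_left; rewrite tensmxs_mul -(tensmxs1 C d n).
by apply: tensmxs_ext => j; rewrite mulVmx.
Qed.

Lemma minvsqrt_tens (A : 'I_n -> 'M[C]_d) :
  (forall j, pdmx (A j)) ->
  minvsqrt (tensmxs A) = tensmxs (fun j => minvsqrt (A j)).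
Proof.
move=> pA; rewrite /minvsqrt; apply: msqrt_uniq.
  apply: tensmxs_psd => j; exact: (msqrtP (pd_inv_psd (pA j))).1.
rewrite tensmxs_mul tensmxs_inv; last by move=> j; exact: pd_unit.
by apply: tensmxs_ext => j; rewrite (msqrtP (pd_inv_psd (pA j))).2.
Qed.

End TensC.
Section Deriv.
Variable R : realType.
Local Notation C := R[i].

Lemma ReMc (x y : C) : complex.Re (x * y) = complex.Re x * complex.Re y - complex.Im x * complex.Im y.
Proof. by case: x => a b; case: y => c e. Qed.
Lemma ImMc (x y : C) : complex.Im (x * y) = complex.Re x * complex.Im y + complex.Im x * complex.Re y.
Proof. by case: x => a b; case: y => c e. Qed.
Lemma ReDc (x y : C) : complex.Re (x + y) = complex.Re x + complex.Re y.
Proof. by case: x => a b; case: y => c e. Qed.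
Lemma ImDc (x y : C) : complex.Im (x + y) = complex.Im x + complex.Im y.
Proof. by case: x => a b; case: y => c e. Qed.
Lemma ReJc (x : C) : complex.Re (Num.conj x) = complex.Re x.
Proof. by case: x => a b. Qed.
Lemma ImJc (x : C) : complex.Im (Num.conj x) = - complex.Im x.
Proof. by case: x => a b. Qed.
Lemma ceq (x y : C) : complex.Re x = complex.Re y -> complex.Im x = complex.Im y -> x = y.
Proof. by case: x => a b; case: y => c e /= -> ->. Qed.
Lemma isd_eq (f : R -> R) (t : R) (df df' : R) : is_derive t (1 : R) f df -> df = df' -> is_derive t 1 f df'.
Proof. by move=> h <-. Qed.

Definition cder (g : R -> C) (t : R) (dg : C) :=
  is_derive t 1 (fun s => complex.Re (g s)) (complex.Re dg) /\
  is_derive t 1 (fun s => complex.Im (g s)) (complex.Im dg).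

Lemma cder_cst (c : C) t : cder (fun _ => c) t 0.
Proof. by split; exact: is_derive_cst. Qed.

Lemma cderD g h t dg dh : cder g t dg -> cder h t dh ->
  cder (fun s => g s + h s) t (dg + dh).
Proof.
move=> [gr gi] [hr hi]; split.
  have -> : (fun s => complex.Re (g s + h s)) =
     (fun s => complex.Re (g s)) + (fun s => complex.Re (h s)).
    by apply: boolp.funext => s; rewrite ReDc.
  by rewrite ReDc; apply: is_deriveD.
have -> : (fun s => complex.Im (g s + h s)) =
   (fun s => complex.Im (g s)) + (fun s => complex.Im (h s)).
  by apply: boolp.funext => s; rewrite ImDc.
by rewrite ImDc; apply: is_deriveD.
Qed.

Lemma cderM g h t dg dh : cder g t dg -> cder h t dh ->
  cder (fun s => g s * h s) t (dg * h t + g t * dh).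
Proof.
move=> [gr gi] [hr hi]; split.
  have -> : (fun s => complex.Re (g s * h s)) =
     (fun s => complex.Re (g s)) * (fun s => complex.Re (h s)) -
     (fun s => complex.Im (g s)) * (fun s => complex.Im (h s)).
    by apply: boolp.funext => s; rewrite ReMc.
  apply: (isd_eq (is_deriveB (is_deriveM gr hr) (is_deriveM gi hi))).
  rewrite ReDc !ReMc; rewrite -![_ *: _]/(_ * _); ring.
have -> : (fun s => complex.Im (g s * h s)) =
   (fun s => complex.Re (g s)) * (fun s => complex.Im (h s)) +
   (fun s => complex.Im (g s)) * (fun s => complex.Re (h s)).
  by apply: boolp.funext => s; rewrite ImMc.
apply: (isd_eq (is_deriveD (is_deriveM gr hi) (is_deriveM gi hr))).
rewrite ImDc !ImMc; rewrite -![_ *: _]/(_ * _); ring.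
Qed.

Lemma cder_conj g t dg : cder g t dg ->
  cder (fun s => Num.conj (g s)) t (Num.conj dg).
Proof.
move=> [gr gi]; split.
  have -> : (fun s => complex.Re (Num.conj (g s))) = (fun s => complex.Re (g s)).
    by apply: boolp.funext => s; rewrite ReJc.
  by rewrite ReJc.
have -> : (fun s => complex.Im (Num.conj (g s))) = - (fun s => complex.Im (g s)).
  by apply: boolp.funext => s; rewrite ImJc.
by rewrite ImJc; apply: is_deriveN.
Qed.

Lemma cder_unique g t d1 d2 : cder g t d1 -> cder g t d2 -> d1 = d2.
Proof.
move=> [r1 i1] [r2 i2]; apply: ceq.
  by rewrite -(@derive_val _ _ _ _ _ _ _ r1) -(@derive_val _ _ _ _ _ _ _ r2).
by rewrite -(@derive_val _ _ _ _ _ _ _ i1) -(@derive_val _ _ _ _ _ _ _ i2).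
Qed.

Lemma cder_near g h t dg : (\forall s \near t, g s = h s) ->
  cder g t dg -> cder h t dg.
Proof.
move=> gh [gr gi]; split.
  by apply: near_eq_is_derive gr; apply: filterS gh => s ->.
by apply: near_eq_is_derive gi; apply: filterS gh => s ->.
Qed.

Lemma cder_sum (I : Type) (r : seq I) (P : pred I) (f : I -> R -> C) (df : I -> C) t :
  (forall k, cder (f k) t (df k)) ->
  cder (fun s => \sum_(k <- r | P k) f k s) t (\sum_(k <- r | P k) df k).
Proof.
move=> hf; elim: r => [|a r IH].
  have -> : (fun s => \sum_(k <- [::] | P k) f k s) = fun _ => 0.
    by apply: boolp.funext => s; rewrite big_nil.
  rewrite big_nil; exact: cder_cst.
have -> : (fun s => \sum_(k <- a :: r | P k) f k s) =
  fun s => if P a then f a s + \sum_(k <- r | P k) f k s else \sum_(k <- r | P k) f k s.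
  by apply: boolp.funext => s; rewrite big_cons.
rewrite big_cons; case: (P a) => //; exact: cderD.
Qed.

Lemma cder_prod (I : eqType) (r : seq I) (f : I -> R -> C) (df : I -> C) t :
  uniq r -> (forall k, cder (f k) t (df k)) ->
  cder (fun s => \prod_(k <- r) f k s) t
       (\sum_(j <- r) \prod_(k <- r) (if k == j then df k else f k t)).
Proof.
move=> + hf; elim: r => [|a r IH].
  move=> _; have -> : (fun s => \prod_(k <- [::]) f k s) = fun _ => 1.
    by apply: boolp.funext => s; rewrite big_nil.
  rewrite big_nil; exact: cder_cst.
move=> /= /andP [ar ur].
have -> : (fun s => \prod_(k <- a :: r) f k s) = fun s => f a s * \prod_(k <- r) f k s.
  by apply: boolp.funext => s; rewrite big_cons.
rewrite big_cons big_cons eqxx.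
have -> : \prod_(k <- r) (if k == a then df k else f k t) = \prod_(k <- r) f k t.
  rewrite big_seq_cond [RHS]big_seq_cond; apply: eq_bigr => k /andP [kr _].
  have ka : (k == a) = false by apply: contraNF ar => /eqP <-.
  by rewrite ka.
have -> : \sum_(j <- r) \prod_(k <- a :: r) (if k == j then df k else f k t) =
          f a t * \sum_(j <- r) \prod_(k <- r) (if k == j then df k else f k t).
  rewrite mulr_sumr big_seq_cond [RHS]big_seq_cond; apply: eq_bigr => j /andP [jr _].
  have aj : (a == j) = false by apply: contraNF ar => /eqP ->.
  by rewrite big_cons aj.
exact: cderM (hf a) (IH ur).
Qed.

Definition mxder m (f : R -> 'M[C]_m) t (D : 'M[C]_m) :=
  forall i j, cder (fun s => f s i j) t (D i j).

Lemma mxder_derive m (f : R -> 'M[C]_m) t D : mxder f t D -> mx_derive f t = D.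
Proof.
move=> hD; apply/matrixP => i j; rewrite mxE; have [hr hi] := hD i j.
apply: ceq => /=; rewrite derive1E.
  exact: (@derive_val _ _ _ _ _ _ _ hr).
exact: (@derive_val _ _ _ _ _ _ _ hi).
Qed.

Lemma mx_derivable_mxder m (f : R -> 'M[C]_m) t :
  mx_derivable f t -> mxder f t (mx_derive f t).
Proof.
move=> hf i j; have [hr hi] := hf i j; split; rewrite mxE /= derive1E.
  exact: derivableP.
exact: derivableP.
Qed.

Lemma mxder_tr m (f : R -> 'M[C]_m) t D (B : 'M[C]_m) : mxder f t D ->
  cder (fun s => \tr (f s *m B)) t (\tr (D *m B)).
Proof.
move=> hD; rewrite /mxtrace.
have -> : (fun s => \sum_i (f s *m B) i i) = fun s => \sum_i \sum_k f s i k * B k i.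
  by apply: boolp.funext => s; apply: eq_bigr => i _; rewrite mxE.
under eq_bigr do rewrite mxE.
apply: cder_sum => i; apply: cder_sum => k.
have := cderM (hD i k) (cder_cst (B k i) t).
by rewrite mulr0 addr0.
Qed.

Lemma near_itv (a b : \bar R) (t : R) : (a < t%:E < b)%E ->
  \forall s \near t, (a < s%:E < b)%E.
Proof.
move=> /andP [ta tb].
have ha : \forall s \near t, (a < s%:E)%E.
  move: ta; case: a => [a'| |] //=.
    rewrite lte_fin => h; near=> s; rewrite lte_fin; near: s.
    exact: lt_nbhsr.
  by move=> _; near=> s; rewrite ltNyr.
have hb : \forall s \near t, (s%:E < b)%E.
  move: tb; case: b => [b'| |] //=.
    rewrite lte_fin => h; near=> s; rewrite lte_fin; near: s.
    exact: lt_nbhsl.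
  by move=> _; near=> s; rewrite ltry.
near=> s; apply/andP; split; [near: s; exact: ha | near: s; exact: hb].
Unshelve. all: by end_near.
Qed.

Lemma cder_id t : cder (fun s => s%:C) t 1.
Proof.
split; last exact: is_derive_cst.
have -> : (fun s : R => complex.Re (s%:C)) = id by [].
exact: is_derive_id.
Qed.

Lemma mxder_herm m (f : R -> 'M[C]_m) t D : mxder f t D ->
  (\forall s \near t, (f s)^t* = f s) -> D^t* = D.
Proof.
move=> hD hn; apply/matrixP => i j; rewrite !mxE.
have h1 := cder_conj (hD j i).
have h2 : cder (fun s => Num.conj (f s j i)) t (D i j).
  apply: (cder_near _ (hD i j)); near=> s.
  have hs : (f s)^t* = f s by near: s.
  by rewrite -[in LHS]hs !mxE.
exact: cder_unique h1 h2.
Unshelve. all: by end_near.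
Qed.

End Deriv.
Unset Implicit Arguments.

Theorem mainTheorem10 (R : realType) (d n : nat) (a b : \bar R)
    (rho : 'I_n -> R -> 'M[R[i]]_d) (Theta : 'M[R[i]]_(tdim d n)) :
  (a < b)%E ->
  (forall (j : 'I_n) (t : R), (a < t%:E < b)%E -> pd_density (rho j t)) ->
  (forall (j : 'I_n) (t : R), (a < t%:E < b)%E -> mx_derivable (rho j) t) ->
  Theta \is hermsymmx ->
  (forall t : R, (a < t%:E < b)%E ->
     \tr (tensmxs (fun j => rho j t) *m Theta) = t%:C) ->
  forall t : R, (a < t%:E < b)%E ->
    let vrho := fun s : R => tensmxs (fun j => rho j s) in
    let HH := Hhat vrho t in
    let H := fun j : 'I_n => Hhat (rho j) t in
    let Fisher := \tr (vrho t *m HH ^+ 2) in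
    [/\ HH = \sum_(j < n) embed_at j (H j),
        Fisher = \sum_(j < n) \tr (rho j t *m (H j) ^+ 2),
        1 / Fisher <= \tr (vrho t *m (Theta - (t%:C)%:M) ^+ 2)
      & forall rho0 : R -> 'M[R[i]]_d, (forall j, rho j = rho0) ->
          1 / (n%:R * \tr (rho0 t *m (Hhat rho0 t) ^+ 2))
            <= \tr (vrho t *m (Theta - (t%:C)%:M) ^+ 2)].
Proof.
move=> hab hpd hder hTh htr t ht vrho HH H Fisher.
have Hn := near_itv ht.
pose D j := mx_derive (rho j) t.
pose S j := minvsqrt (rho j t).
have pdj j : pdmx (rho j t) := (hpd j t ht).1.
have trj j : \tr (rho j t) = 1 := (hpd j t ht).2.
have mxDj j : mxder (rho j) t (D j) := mx_derivable_mxder (hder j t ht).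
have trD j : \tr (D j) = 0.
  have h1 := mxder_tr 1%:M (mxDj j).
  have h2 : cder (fun s => \tr (rho j s *m 1%:M)) t 0.
    apply: (cder_near _ (cder_cst 1 t)); near=> s.
    have hs : (a < s%:E < b)%E by near: s.
    by rewrite mulmx1 (hpd j s hs).2.
  by rewrite -[D j]mulmx1; exact: cder_unique h1 h2.
have trH j : \tr (rho j t *m H j) = 0.
  have [_ _ _ SrS] := minvsqrtP (pdj j).
  rewrite /H /Hhat -/(S j) -/(D j) in SrS *.
  by rewrite !mulmxA mxtrace_mulC !mulmxA SrS mul1mx trD.
pose Dv := \sum_(j < n) tensmxs (fun k => if k == j then D k else rho k t).
have mxDv : mxder vrho t Dv.
  move=> x y; pose ex := (enum_val x : {ffun 'I_n -> 'I_d}).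
  pose ey := (enum_val y : {ffun 'I_n -> 'I_d}).
  have -> : (fun s => vrho s x y) = fun s => \prod_(k < n) rho k s (ex k) (ey k).
    by apply: boolp.funext => s; rewrite /vrho mxE.
  have -> : Dv x y = \sum_(j < n) \prod_(k < n)
      (if k == j then D k (ex k) (ey k) else rho k t (ex k) (ey k)).
    rewrite /Dv summxE; apply: eq_bigr => j _; rewrite mxE.
    by apply: eq_bigr => k _; case: (k == j).
  apply: cder_prod; first exact: index_enum_uniq.
  by move=> k; exact: mxDj.
have Sv_eq : minvsqrt (vrho t) = tensmxs S := minvsqrt_tens pdj.
have pSv : psdmx (tensmxs S).
  by apply: tensmxs_psd => j; have [] := minvsqrtP (pdj j).
have SvSv : tensmxs S *m tensmxs S = invmx (vrho t).
  rewrite tensmxs_mul /vrho tensmxs_inv; last by move=> j; exact: pd_unit.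
  by apply: tensmxs_ext => j; have [] := minvsqrtP (pdj j).
have vunit : vrho t \in unitmx.
  have h : tensmxs (fun j => invmx (rho j t)) *m vrho t = 1%:M.
    rewrite /vrho tensmxs_mul -(tensmxs1 _ d n); apply: tensmxs_ext => j.
    exact: mulVmx (pd_unit (pdj j)).
  by have [] := mulmx1_unit h.
have [uSv SvrSv hQ QQ] := isqrt_facts pSv SvSv vunit.
have HHE : HH = tensmxs S *m Dv *m tensmxs S.
  by rewrite /HH /Hhat Sv_eq (mxder_derive mxDv).
have part1 : HH = \sum_(j < n) embed_at j (H j).
  rewrite HHE /Dv mulmx_sumr mulmx_suml; apply: eq_bigr => j _.
  rewrite !tensmxs_mul /embed_at; apply: tensmxs_ext => k /=.
  case: eqP => [->|_]; first by [].
  by have [_ _ _ ->] := minvsqrtP (pdj k).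
have trE j k : \tr (vrho t *m (embed_at j (H j) *m embed_at k (H k))) =
    \prod_(l < n) \tr (rho l t *m (if l == j then H j else 1%:M)
                              *m (if l == k then H k else 1%:M)).
  by rewrite /embed_at /vrho mulmxA !tensmxs_mul tensmxs_tr.
have part2 : Fisher = \sum_(j < n) \tr (rho j t *m (H j) ^+ 2).
  rewrite /Fisher part1 expr2 -mulmxE mulmx_suml mulmx_sumr linear_sum /=.
  apply: eq_bigr => j _.
  rewrite mulmx_sumr mulmx_sumr linear_sum /= (bigD1 j) //= big1 ?addr0.
    rewrite trE (bigD1 j) //= eqxx big1 ?mulr1; first by rewrite expr2 -mulmxE mulmxA.
    by move=> l lj; rewrite (negbTE lj) !mulmx1 trj.
  move=> k kj; rewrite trE (bigD1 j) //= eqxx.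
  by rewrite eq_sym (negbTE kj) mulmx1 trH mul0r.
have hDv : Dv^t* = Dv.
  apply: (mxder_herm mxDv); near=> s.
  have hs : (a < s%:E < b)%E by near: s.
  rewrite /vrho; apply: tensmxs_herm => j.
  exact: psd_herm (pd_psd (hpd j s hs).1).
have hSv : (tensmxs S)^t* = tensmxs S := psd_herm pSv.
have hHH : HH^t* = HH by rewrite HHE !trmxC_mul hSv hDv mulmxA.
pose Q := invmx (tensmxs S).
clearbody HH.
have QHQ : Q *m HH *m Q = Dv.
  by rewrite HHE /Q !mulmxA mulVmx // mul1mx mulmxK.
have trDvTh : \tr (Dv *m Theta) = 1.
  have h1 := mxder_tr Theta mxDv.
  have h2 : cder (fun s => \tr (vrho s *m Theta)) t 1.
    apply: (cder_near _ (cder_id t)); near=> s.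
    have hs : (a < s%:E < b)%E by near: s.
    by rewrite /vrho htr.
  exact: cder_unique h1 h2.
have trDv : \tr Dv = 0.
  have h1 := mxder_tr 1%:M mxDv.
  have h2 : cder (fun s => \tr (vrho s *m 1%:M)) t 0.
    apply: (cder_near _ (cder_cst 1 t)); near=> s.
    have hs : (a < s%:E < b)%E by near: s.
    rewrite mulmx1 /vrho tensmxs_tr big1 // => j _.
    exact: (hpd j s hs).2.
  by rewrite -[Dv]mulmx1; exact: cder_unique h1 h2.
set X := Theta - (t%:C)%:M.
have hTh' : Theta^t* = Theta by apply/hermP.
have hX : X^t* = X.
  rewrite /X linearB /= map_mxB hTh' tr_scalar_mx map_scalar_mx.
  by congr (_ - _%:M); apply: ceq; rewrite ?ReJc ?ImJc //= oppr0.
have ip1 : \tr ((HH *m Q)^t* *m (Q *m X)) = 1.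
  rewrite trmxC_mul hQ hHH mulmxA QHQ /X mulmxBr linearB /= mul_mx_scalar linearZ /=.
  by rewrite trDvTh trDv mulr0 subr0.
have := cs_trace ip1.
have -> : \tr ((HH *m Q)^t* *m (HH *m Q)) = \tr (vrho t *m HH ^+ 2).
  by rewrite trmxC_mul hQ hHH !mulmxA mxtrace_mulC !mulmxA QQ.
have -> : \tr ((Q *m X)^t* *m (Q *m X)) = \tr (vrho t *m X ^+ 2).
  transitivity (\tr (X *m (vrho t *m X))).
    by rewrite trmxC_mul hQ hX mulmxA -(mulmxA X Q Q) QQ mulmxA.
  by rewrite mxtrace_mulC -mulmxA expr2 -mulmxE.
move=> part3; split => // rho0 hr0.
suff <- : Fisher = n%:R * \tr (rho0 t *m (Hhat rho0 t) ^+ 2) by [].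
rewrite part2 /H; under eq_bigr do rewrite hr0.
by rewrite sumr_const card_ord mulr_natl.
Unshelve. all: by end_near.
Qed.
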